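(* For $\upsilon=2/3$, the limit $\lim_{N\to\infty,\ N\text{ odd}}\rho(\upsilon,N)$ does not exist (here $N$ ranges over all odd positive integers, not only primes).
   Context: For an integer $N\ge 2$ and $f:\mathbb{Z}_N\to\mathbb{C}$, define $\mathbb{E}(f)=\frac1N\sum_{n\in\mathbb{Z}_N} f(n)$ and $\Lambda_3(f)=\frac{1}{N^2}\sum_{n,d\in\mathbb{Z}_N} f(n)f(n+d)f(n+2d)$. For $\upsilon\in(0,1]$, $\rho(\upsilon,N)=\min\{\Lambda_3(f): f:\mathbb{Z}_N\to[0,1],\ \mathbb{E}(f)\ge\upsilon\}$. *)

(* Defs.v *)
From HB Require Import structures.
From mathcomp Require Import all_boot all_order all_algebra.
From mathcomp Require Import all_classical all_reals all_analysis.
Set Implicit Arguments. Unset Strict Implicit. Unset Printing Implicit Defensive.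
Import Order.TTheory GRing.Theory Num.Theory.
Local Open Scope ring_scope.
Local Open Scope classical_set_scope.

(* Functions on Z_N are functions 'Z_N -> R ; only used for N >= 2,
   where 'Z_N is exactly Z/NZ. *)

Definition Ef (R : realType) (N : nat) (f : 'Z_N -> R) : R :=
  N%:R^-1 * \sum_(n : 'Z_N) f n.

Definition Lambda3 (R : realType) (N : nat) (f : 'Z_N -> R) : R :=
  (N%:R ^+ 2)^-1 *
    \sum_(n : 'Z_N) \sum_(d : 'Z_N) f n * f (n + d) * f (n + d *+ 2).

Definition admissible (R : realType) (v : R) (N : nat) : set ('Z_N -> R) :=
  [set f | (forall n, 0 <= f n <= 1) /\ v <= @Ef R N f].

(* rho(v,N) = min of Lambda_3 over admissible f (the minimum is attained
   by compactness, so it equals the infimum). *)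
Definition rho (R : realType) (v : R) (N : nat) : R :=
  inf [set @Lambda3 R N f | f in @admissible R v N].

(* Main.v *)
Require Import Defs.
From HB Require Import structures.
From mathcomp Require Import all_boot all_order all_algebra.
From mathcomp Require Import all_classical all_reals all_analysis.
From mathcomp Require Import ring lra zify.
Import Order.TTheory GRing.Theory Num.Theory numFieldNormedType.Exports.
Local Open Scope ring_scope.
Local Open Scope classical_set_scope.

Lemma sum_shift (R : realType) (N : nat) (F : 'Z_N -> R) (a : 'Z_N) :
  \sum_x F (x + a) = \sum_x F x.
Proof. by rewrite [RHS](reindex_inj (addIr a)). Qed.

Lemma sum_scale (R : realType) (N : nat) (F : 'Z_N -> R) (c : 'Z_N) :
  c \is a GRing.unit -> \sum_x F (c * x) = \sum_x F x.
Proof. by move=> hc; rewrite [RHS](reindex_inj (mulrI hc)). Qed.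

Lemma sum2_affine (R : realType) (N : nat) (G : 'Z_N -> 'Z_N -> R) (i : nat) (c : 'Z_N) :
  c \is a GRing.unit ->
  \sum_x \sum_d G (x + d *+ i) (c * d) = \sum_x \sum_d G x d.
Proof.
move=> hc; rewrite exchange_big /=.
under eq_bigr => d _ do rewrite (@sum_shift _ _ (fun x => G x (c * d)) (d *+ i)).
rewrite exchange_big /=.
by under eq_bigr => x _ do rewrite (@sum_scale _ _ (G x) _ hc).
Qed.

Lemma sum_pair (R : realType) (N : nat) (f : 'Z_N -> R) :
  \sum_x \sum_d f x * f (x + d) = (\sum_x f x) ^+ 2.
Proof.
rewrite expr2 big_distrl /=; apply: eq_bigr => x _.
rewrite -mulr_sumr; congr (_ * _); rewrite -(@sum_shift _ _ f x).
by apply: eq_bigr => d _; rewrite addrC.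
Qed.
Lemma pointwise (R : realType) (a0 a1 a2 a3 a4 : R) :
  0 <= a0 <= 1 -> 0 <= a1 <= 1 -> 0 <= a2 <= 1 -> 0 <= a3 <= 1 -> 0 <= a4 <= 1 ->
  0 <= 3%:R * (a0 * a1 * a2) + 2%:R * (a0 * a2 * a4) + 2%:R * (a1 * a2 * a3)
       + a2 * a3 * a4 + a0 + a1 + 3%:R * a2
       - 2%:R * (a0 * a1) - 3%:R * (a0 * a2) + a0 * a3 - a0 * a4
       - 3%:R * (a1 * a2) - a1 * a3 + a1 * a4 - 2%:R * (a2 * a3) - 2%:R * (a2 * a4).
Proof.
move=> /andP[h0 h0'] /andP[h1 h1'] /andP[h2 h2'] /andP[h3 h3'] /andP[h4 h4'].
rewrite -subr_ge0 in h0'; rewrite -subr_ge0 in h1'; rewrite -subr_ge0 in h2'.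
rewrite -subr_ge0 in h3'; rewrite -subr_ge0 in h4'.
have -> : 3%:R * (a0 * a1 * a2) + 2%:R * (a0 * a2 * a4) + 2%:R * (a1 * a2 * a3)
       + a2 * a3 * a4 + a0 + a1 + 3%:R * a2
       - 2%:R * (a0 * a1) - 3%:R * (a0 * a2) + a0 * a3 - a0 * a4
       - 3%:R * (a1 * a2) - a1 * a3 + a1 * a4 - 2%:R * (a2 * a3) - 2%:R * (a2 * a4)
  = 3%:R * ((1 - a0) * (1 - a1) * a2 * (1 - a3) * (1 - a4)) + ((1 - a0) * (1 - a1) * a2 * (1 - a3) * a4) + ((1 - a0) * (1 - a1) * a2 * a3 * (1 - a4)) + ((1 - a0) * a1 * (1 - a2) * (1 - a3) * (1 - a4)) + 2%:R * ((1 - a0) * a1 * (1 - a2) * (1 - a3) * a4) + ((1 - a0) * a1 * (1 - a2) * a3 * a4) + ((1 - a0) * a1 * a2 * (1 - a3) * (1 - a4)) + (a0 * (1 - a1) * (1 - a2) * (1 - a3) * (1 - a4)) + 2%:R * (a0 * (1 - a1) * (1 - a2) * a3 * (1 - a4)) + (a0 * (1 - a1) * (1 - a2) * a3 * a4) + (a0 * (1 - a1) * a2 * (1 - a3) * (1 - a4)) + (a0 * a1 * a2 * a3 * a4) by ring.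
by repeat apply: addr_ge0; repeat apply: mulr_ge0.
Qed.

Lemma pairsum (R : realType) (N : nat) (f : 'Z_N -> R) (i j : nat) :
  (i <= j)%N -> ((j - i)%:R : 'Z_N) \is a GRing.unit ->
  \sum_x \sum_d f (x + d *+ i) * f (x + d *+ j) = (\sum_x f x) ^+ 2.
Proof.
move=> hij hu; rewrite -sum_pair -(@sum2_affine _ _ (fun y e => f y * f (y + e)) i _ hu).
apply: eq_bigr => x _; apply: eq_bigr => d _ /=.
by rewrite mulr_natl -addrA -mulrnDr subnKC.
Qed.

Lemma triplesum (R : realType) (N : nat) (f : 'Z_N -> R) (i j k s : nat) :
  j = (i + s)%N -> k = (i + s * 2)%N -> (s%:R : 'Z_N) \is a GRing.unit ->
  \sum_x \sum_d f (x + d *+ i) * f (x + d *+ j) * f (x + d *+ k) =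
  \sum_x \sum_d f x * f (x + d) * f (x + d *+ 2).
Proof.
move=> -> -> hu.
rewrite -(@sum2_affine _ _ (fun y e => f y * f (y + e) * f (y + e *+ 2)) i _ hu).
apply: eq_bigr => x _; apply: eq_bigr => d _ /=.
by rewrite !mulr_natl -!addrA -mulrnA -!mulrnDr.
Qed.

Lemma singlesum (R : realType) (N : nat) (f : 'Z_N -> R) (i : nat) :
  \sum_x \sum_d f (x + d *+ i) = (\sum_x f x) *+ #|'Z_N|.
Proof.
have H := @sum2_affine R N (fun y _ => f y) i 1 (unitr1 _).
simpl in H; rewrite H.
by rewrite -sumrMnl; apply: eq_bigr => x _; rewrite sumr_const.
Qed.

Lemma lower (R : realType) (N : nat) (f : 'Z_N -> R) :
  (1 < N)%N -> (2%:R : 'Z_N) \is a GRing.unit -> (3%:R : 'Z_N) \is a GRing.unit ->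
  (forall n, 0 <= f n <= 1) -> 2 / 3 <= Ef f -> 1 / 4 <= Lambda3 f.
Proof.
move=> hN h2 h3 hf hE.
have h1 : (1%:R : 'Z_N) \is a GRing.unit by rewrite unitr1.
have h4 : (4%:R : 'Z_N) \is a GRing.unit.
  by rewrite (_ : 4%:R = 2%:R * 2%:R) ?unitrM ?h2 // -natrM.
have card : #|'Z_N| = N by rewrite card_ord Zp_cast.
set S := \sum_x f x.
set L := \sum_x \sum_d f x * f (x + d) * f (x + d *+ 2).
pose a (i : nat) (x d : 'Z_N) := f (x + d *+ i).
have H : 0 <= \sum_x \sum_d (3%:R * (a 0%N x d * a 1%N x d * a 2%N x d) + 2%:R * (a 0%N x d * a 2%N x d * a 4%N x d)
       + 2%:R * (a 1%N x d * a 2%N x d * a 3%N x d)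
       + a 2%N x d * a 3%N x d * a 4%N x d + a 0%N x d + a 1%N x d + 3%:R * a 2%N x d
       - 2%:R * (a 0%N x d * a 1%N x d) - 3%:R * (a 0%N x d * a 2%N x d) + a 0%N x d * a 3%N x d - a 0%N x d * a 4%N x d
       - 3%:R * (a 1%N x d * a 2%N x d) - a 1%N x d * a 3%N x d + a 1%N x d * a 4%N x d
       - 2%:R * (a 2%N x d * a 3%N x d) - 2%:R * (a 2%N x d * a 4%N x d)).
  by apply: sumr_ge0 => x _; apply: sumr_ge0 => d _; apply: pointwise; exact: hf.
rewrite pair_bigA /= !(big_split, sumrB, sumrN) /= -!mulr_sumr /a in H.
have T012 := @triplesum _ _ f 0%N 1%N 2%N 1%N erefl erefl h1. rewrite pair_bigA /= in T012.
have T024 := @triplesum _ _ f 0%N 2%N 4%N 2%N erefl erefl h2. rewrite pair_bigA /= in T024.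
have T123 := @triplesum _ _ f 1%N 2%N 3%N 1%N erefl erefl h1. rewrite pair_bigA /= in T123.
have T234 := @triplesum _ _ f 2%N 3%N 4%N 1%N erefl erefl h1. rewrite pair_bigA /= in T234.
rewrite T012 T024 T123 T234 in H.
have P := fun i j (hij : (i <= j)%N) hu => @pairsum _ _ f i j hij hu.
have P01 := P 0%N 1%N erefl h1. rewrite pair_bigA /= in P01.
have P02 := P 0%N 2%N erefl h2. rewrite pair_bigA /= in P02.
have P03 := P 0%N 3%N erefl h3. rewrite pair_bigA /= in P03.
have P04 := P 0%N 4%N erefl h4. rewrite pair_bigA /= in P04.
have P12 := P 1%N 2%N erefl h1. rewrite pair_bigA /= in P12.
have P13 := P 1%N 3%N erefl h2. rewrite pair_bigA /= in P13.
have P14 := P 1%N 4%N erefl h3. rewrite pair_bigA /= in P14.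
have P23 := P 2%N 3%N erefl h1. rewrite pair_bigA /= in P23.
have P24 := P 2%N 4%N erefl h2. rewrite pair_bigA /= in P24.
rewrite P01 P02 P03 P04 P12 P13 P14 P23 P24 in H.
have S0 := @singlesum _ _ f 0%N. rewrite pair_bigA /= in S0.
have S1 := @singlesum _ _ f 1%N. rewrite pair_bigA /= in S1.
have S2 := @singlesum _ _ f 2%N. rewrite pair_bigA /= in S2.
rewrite S0 S1 S2 card -/S -/L -(mulr_natr S N) in H.
have hK : 0 < (N%:R : R) by rewrite ltr0n; apply: ltn_trans hN.
rewrite /Ef -/S ler_pdivlMl // in hE.
rewrite /Lambda3 -/L ler_pdivlMl ?exprn_gt0 //.
have hS0 : 0 <= S by apply: sumr_ge0 => x _; case/andP: (hf x).
set K := (N%:R : R) in hK hE H *.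
clearbody K S L.
clear -H hE hK hS0.
have key : 0 <= (3 * S - 2 * K) * (4 * S + K) by apply: mulr_ge0; lra.
nra.
Qed.

Lemma valZpD (N : nat) (x y : 'Z_N) : val (x + y) = ((val x + val y) %% (Zp_trunc N).+2)%N.
Proof. by []. Qed.

Lemma count3 (R : realType) (M : nat) :
  \sum_(0 <= i < (3 * M)%N) (if (i %% 3 == 0)%N then 1 else 0 : R) = M%:R.
Proof.
elim: M => [|M IH]. rewrite muln0 big_geq //.
rewrite (_ : (3 * M.+1 = (3 * M).+3)%N); last by rewrite mulnS addnC addn3.
rewrite !big_nat_recr //= IH.
have h0 : ((3 * M) %% 3 = 0)%N by rewrite mulnC modnMl.
have h1 : ((3 * M).+1 %% 3 = 1)%N by rewrite -addn1 mulnC modnMDl.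
have h2 : ((3 * M).+2 %% 3 = 2)%N by rewrite -addn2 mulnC modnMDl.
by rewrite h0 h1 h2 /= !addr0 -natr1.
Qed.

Definition r3 {N : nat} (x : 'Z_N) : nat := (val x %% 3)%N.
Definition f0 (R : realType) {N : nat} (x : 'Z_N) : R := if (r3 x == 0)%N then 0 else 1.
Definition e0 (R : realType) {N : nat} (x : 'Z_N) : R := if (r3 x == 0)%N then 1 else 0.

Lemma r3D (N : nat) (x y : 'Z_N) : (1 < N)%N -> (3 %| N)%N ->
  r3 (x + y) = ((r3 x + r3 y) %% 3)%N.
Proof.
move=> hN h3; rewrite /r3 valZpD modn_dvdm; last by rewrite Zp_cast.
by rewrite modnDm.
Qed.

Lemma prod_bound (R : realType) (N : nat) (n d : 'Z_N) : (1 < N)%N -> (3 %| N)%N ->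
  f0 R n * f0 R (n + d) * f0 R (n + d *+ 2) <= f0 R n * e0 R d.
Proof.
move=> hN h3; rewrite /f0 /e0 mulr2n !r3D //.
have ha : (r3 n < 3)%N by rewrite ltn_pmod.
have hb : (r3 d < 3)%N by rewrite ltn_pmod.
move: ha hb; case: (r3 n) => [|[|[|a]]] //; case: (r3 d) => [|[|[|b]]] //= _ _;
  rewrite ?mulr0 ?mul0r ?mulr1 ?mul1r //.
Qed.

Lemma sum_e0 (R : realType) (N : nat) : (1 < N)%N -> (3 %| N)%N ->
  \sum_(x : 'Z_N) e0 R x = (N %/ 3)%:R.
Proof.
move=> hN h3; rewrite /e0 /r3.
rewrite -(big_mkord xpredT (fun i => if (i %% 3 == 0)%N then 1 else 0 : R)).
have -> : (Zp_trunc N).+2 = (3 * (N %/ 3))%N by rewrite Zp_cast // mulnC divnK.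
exact: count3.
Qed.

Lemma card_Z (N : nat) : (1 < N)%N -> #|'Z_N| = N.
Proof. by move=> hN; rewrite card_ord Zp_cast. Qed.

Lemma sum_f0 (R : realType) (N : nat) : (1 < N)%N -> (3 %| N)%N ->
  \sum_(x : 'Z_N) f0 R x = (2 * (N %/ 3))%:R.
Proof.
move=> hN h3.
have -> : \sum_(x : 'Z_N) f0 R x = \sum_(x : 'Z_N) (1 - e0 R x).
  by apply: eq_bigr => x _; rewrite /f0 /e0; case: ifP => _; rewrite ?subr0 ?subrr.
rewrite sumrB sum_e0 // sumr_const card_Z // -natrB ?leq_div //.
congr (_%:R).
have := divnK h3; set M := (N %/ 3)%N; lia.
Qed.

Lemma Lambda3_ge0 (R : realType) (N : nat) (f : 'Z_N -> R) :
  (forall n, 0 <= f n <= 1) -> 0 <= Lambda3 f.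
Proof.
move=> hf; rewrite /Lambda3; apply: mulr_ge0; first by rewrite invr_ge0 exprn_ge0.
apply: sumr_ge0 => n _; apply: sumr_ge0 => d _.
have hf0 : forall x, 0 <= f x by move=> x; case/andP: (hf x).
by rewrite !mulr_ge0.
Qed.

Lemma f01 (R : realType) (N : nat) (n : 'Z_N) : 0 <= f0 R n <= 1.
Proof. by rewrite /f0; case: ifP => _; rewrite lexx ?ler01. Qed.

Lemma upper (R : realType) (N : nat) : (1 < N)%N -> (3 %| N)%N ->
  rho (2 / 3 : R) N <= 2 / 9.
Proof.
move=> hN h3.
have hlb : has_lbound [set Lambda3 f | f in @admissible R (2 / 3) N].
  by exists 0 => y [f [hf _] <-]; apply: Lambda3_ge0.
have hK : 0 < (N%:R : R) by rewrite ltr0n; apply: ltn_trans hN.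
have NM : N = (N %/ 3 * 3)%N by rewrite divnK.
set M := (N %/ 3)%N in NM.
have hM : 0 < (M%:R : R) by rewrite ltr0n; move: hN; rewrite NM; case: (M).
have hNM : (N%:R : R) = M%:R * 3 by rewrite {1}NM natrM.
have mem : [set Lambda3 f | f in @admissible R (2 / 3) N] (Lambda3 (f0 R (N:=N))).
  exists (f0 R) => //; split; first exact: f01.
  rewrite /Ef sum_f0 // -/M hNM natrM.
  by rewrite le_eqVlt; apply/orP; left; apply/eqP; field; rewrite gt_eqF.
apply: le_trans (ge_inf hlb mem) _.
rewrite /Lambda3.
have hS : \sum_(n : 'Z_N) \sum_(d : 'Z_N) f0 R n * f0 R (n + d) * f0 R (n + d *+ 2)
   <= \sum_(n : 'Z_N) \sum_(d : 'Z_N) f0 R n * e0 R d.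
  by apply: ler_sum => n _; apply: ler_sum => d _; apply: prod_bound.
rewrite -(@ler_pM2l _ (N%:R ^+ 2)) ?exprn_gt0 // mulrA mulfV ?expf_neq0 ?gt_eqF // mul1r.
apply: le_trans hS _.
have -> : \sum_(n : 'Z_N) \sum_(d : 'Z_N) f0 R n * e0 R d = (\sum_(n : 'Z_N) f0 R n) * (\sum_(d : 'Z_N) e0 R d).
  by rewrite big_distrl /=; apply: eq_bigr => n _; rewrite mulr_sumr.
rewrite sum_f0 // sum_e0 // -/M hNM natrM.
rewrite le_eqVlt; apply/orP; left; apply/eqP; field; by rewrite ?gt_eqF.
Qed.

Lemma rho_lower (R : realType) (N : nat) :
  (1 < N)%N -> (2%:R : 'Z_N) \is a GRing.unit -> (3%:R : 'Z_N) \is a GRing.unit ->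
  1 / 4 <= rho (2 / 3 : R) N.
Proof.
move=> hN h2 h3; apply: lb_le_inf.
  exists (Lambda3 (fun _ : 'Z_N => (1 : R))), (fun _ => 1) => //; split.
    by move=> _; rewrite lexx ler01.
  have hK : 0 < (N%:R : R) by rewrite ltr0n; apply: ltn_trans hN.
  rewrite /Ef sumr_const card_Z // -mulr_natr mul1r mulVf ?gt_eqF //.
  lra.
by move=> y [f [hf hE] <-]; apply: lower.
Qed.

Theorem theorem2 (R : realType) :
  ~ (exists l : R,
       (fun k : nat => rho (2 / 3 : R) (2 * k + 3)%N) @ \oo --> l).
Proof.
move=> [l hl].
have he : (0 : R) < 1 / 100 by lra.
have [N0 _ HN0] := cvgr_dist_lt _ _ hl _ he.
have A := HN0 (3 * N0)%N (leq_pmull _ (isT : (0 < 3)%N)).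
have B := HN0 (3 * N0 + 1)%N (leq_trans (leq_pmull _ (isT : (0 < 3)%N)) (leq_addr _ _)).
rewrite /= in A B.
have U : rho (2 / 3 : R) (2 * (3 * N0) + 3)%N <= 2 / 9.
  by apply: upper; lia.
have L : 1 / 4 <= rho (2 / 3 : R) (2 * (3 * N0 + 1) + 3)%N.
  apply: rho_lower; first lia.
    rewrite unitZpE; last lia.
    by rewrite coprimen2 oddD oddM.
  rewrite unitZpE; last lia.
  rewrite coprime_sym -coprime_modr.
  have -> : ((2 * (3 * N0 + 1) + 3) %% 3 = 2)%N by lia.
  by [].
move: A B; rewrite !ltr_norml; lra.
Qed.
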